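(* For every integer $k>4$ there exists a finite simple graph $G$ such that, defining $G_0=G$ and $G_{t+1}=P^k(G_t)$ for $t\ge 0$, we have $G_{t+1}\neq G_t$ for every $t\ge 0$. In other words, iterating $k$-intersection polishing starting from $G$ never reaches a $k$-intersection polished graph.
   Context: All graphs are finite and simple. For a vertex $v$, $N[v]$ denotes its closed neighbourhood (the set of neighbours of $v$ together with $v$). For an integer $k$, $P^k(G)$ is the graph on the same vertex set as $G$ in which two distinct vertices $u,v$ are adjacent if and only if $|N[u]\cap N[v]|\ge k$, the closed neighbourhoods being taken in $G$. A graph $G$ is called $k$-intersection polished if $P^k(G)=G$ (equality of edge sets on the same vertex set). *)

(* Defs.v *)
From mathcomp Require Import all_boot.
Set Implicit Arguments. Unset Strict Implicit. Unset Printing Implicit Defensive.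

Definition simple_graph (T : finType) (e : rel T) : Prop :=
  symmetric e /\ irreflexive e.

Definition closed_nbhd (T : finType) (e : rel T) (v : T) : {set T} :=
  [set u | (u == v) || e v u].

Definition polish (k : nat) (T : finType) (e : rel T) : rel T :=
  fun u v => (u != v) && (k <= #|closed_nbhd e u :&: closed_nbhd e v|).

Definition polish_iter (k : nat) (T : finType) (e : rel T) (t : nat) : rel T :=
  iter t (@polish k T) e.

Definition same_graph (T : finType) (e1 e2 : rel T) : Prop :=
  forall u v, e1 u v = e2 u v.

(* Main.v *)
Require Import Defs.
From mathcomp Require Import all_boot.

Lemma card_cnt (T : finType) (A : {set T}) : #|A| = count (mem A) (enum T).
Proof. by rewrite enumT cardE /enum_mem size_filter. Qed.

Lemma card_sumT (T1 T2 : finType) (A : {set (T1 + T2)%type}) :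
  #|A| = #|[set x | inl x \in A]| + #|[set y | inr y \in A]|.
Proof. by rewrite -!sum1dep_card -sum1_card big_sumType. Qed.

Definition cd (x y : nat) := let d := if x <= y then y - x else x - y in minn d (18 - d).
Definition circN (S : seq nat) (x y : nat) := cd x y \in S.
Definition cntN (S : seq nat) u v :=
  count (fun w => ((w == u) || circN S u w) && ((w == v) || circN S v w)) (iota 0 18).
Definition polN S u v := (u != v) && (5 <= cntN S u v).
Definition chk S T := all (fun u => all (fun v => polN S u v == circN T u v) (iota 0 18)) (iota 0 18).
Definition chk5 S := all (fun u => 5 <= cntN S u u) (iota 0 18).

Definition S0 := [:: 5;6;7;8].
Definition S1 := [:: 1;2;5;6].
Definition S2 := [:: 1;4;6;7].
Definition next (S : seq nat) := if S == S0 then S1 else if S == S1 then S2 else S0.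
Fixpoint cyc (t : nat) := if t is t'.+1 then next (cyc t') else S0.

Lemma cyc_in t : cyc t \in [:: S0; S1; S2].
Proof.
elim: t => [|t IH] //=; rewrite /next.
by move: IH; rewrite !inE => /or3P [] /eqP ->.
Qed.

Lemma chk_ok S : S \in [:: S0; S1; S2] -> chk S (next S) && chk5 S.
Proof. by rewrite !inE => /or3P [] /eqP ->; vm_compute. Qed.

Lemma mem_iota_ord (x : 'I_18) : val x \in iota 0 18.
Proof. by rewrite mem_iota /=. Qed.

Definition circ (S : seq nat) : rel 'I_18 := fun x y => circN S x y.

Lemma card_circ S (x y : 'I_18) :
  #|closed_nbhd (circ S) x :&: closed_nbhd (circ S) y| = cntN S x y.
Proof.
rewrite card_cnt /cntN -[iota 0 18]val_enum_ord [RHS]count_map enumT; apply: eq_count => w.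
by rewrite /= !inE.
Qed.

Lemma polish_circ S : S \in [:: S0; S1; S2] ->
  polish 5 (circ S) =2 circ (next S).
Proof.
move=> /chk_ok /andP [/allP H _] x y.
have := H _ (mem_iota_ord x) => /allP /(_ _ (mem_iota_ord y)) /eqP.
by rewrite /polish card_circ /polN /circ.
Qed.

Definition join a (e : rel 'I_18) : rel ('I_18 + 'I_a)%type :=
  fun u v => match u, v with
             | inl x, inl y => e x y
             | inr i, inr j => i != j
             | _, _ => true end.

Lemma polish_ext k (T : finType) (e1 e2 : rel T) : e1 =2 e2 -> polish k e1 =2 polish k e2.
Proof.
move=> H u v; rewrite /polish /closed_nbhd.
have E w : [set u0 | (u0 == w) || e1 w u0] = [set u0 | (u0 == w) || e2 w u0].
  by apply/setP=> z; rewrite !inE H.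
by rewrite !E.
Qed.

Lemma inr_or (A B : eqType) (z j : B) : (@inr A B z == inr j) || (j != z).
Proof. case: (eqVneq z j) => [->|nzj]; first by rewrite eqxx.
by rewrite orbT. Qed.

Lemma polish_join a e : (forall x, 5 <= #|closed_nbhd e x|) ->
  polish (5 + a) (join a e) =2 join a (polish 5 e).
Proof.
move=> H5 [x|i] [y|j]; rewrite /polish card_sumT.
- have -> : [set z | inl z \in closed_nbhd (join a e) (inl x) :&: closed_nbhd (join a e) (inl y)]
     = closed_nbhd e x :&: closed_nbhd e y.
    by apply/setP => z; rewrite !inE.
  have -> : [set z | inr z \in closed_nbhd (join a e) (inl x) :&: closed_nbhd (join a e) (inl y)]
     = setT.
    by apply/setP => z; rewrite !inE.
  by rewrite cardsT card_ord leq_add2r.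
- have -> : [set z | inl z \in closed_nbhd (join a e) (inl x) :&: closed_nbhd (join a e) (inr j)]
     = closed_nbhd e x.
    by apply/setP => z; rewrite !inE orbT andbT.
  have -> : [set z | inr z \in closed_nbhd (join a e) (inl x) :&: closed_nbhd (join a e) (inr j)]
     = setT.
    by apply/setP => z; rewrite !inE /= inr_or.
  by rewrite cardsT card_ord leq_add2r H5.
- have -> : [set z | inl z \in closed_nbhd (join a e) (inr i) :&: closed_nbhd (join a e) (inl y)]
     = closed_nbhd e y.
    by apply/setP => z; rewrite !inE.
  have -> : [set z | inr z \in closed_nbhd (join a e) (inr i) :&: closed_nbhd (join a e) (inl y)]
     = setT.
    by apply/setP => z; rewrite !inE /= inr_or.
  by rewrite cardsT card_ord leq_add2r H5.
- have -> : [set z | inl z \in closed_nbhd (join a e) (inr i) :&: closed_nbhd (join a e) (inr j)]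
     = setT.
    by apply/setP => z; rewrite !inE.
  have -> : [set z | inr z \in closed_nbhd (join a e) (inr i) :&: closed_nbhd (join a e) (inr j)]
     = setT.
    by apply/setP => z; rewrite !inE /= !inr_or.
  by rewrite !cardsT !card_ord leq_add2r andbT.
Qed.

Lemma circ5 S : S \in [:: S0; S1; S2] -> forall x, 5 <= #|closed_nbhd (circ S) x|.
Proof.
move=> /chk_ok /andP [_ /allP H] x.
by rewrite -[closed_nbhd _ _]setIid card_circ; apply: H; apply: mem_iota_ord.
Qed.

Lemma iter_join a t : polish_iter (5 + a) (join a (circ S0)) t =2 join a (circ (cyc t)).
Proof.
elim: t => [|t IH] u v //.
rewrite [polish_iter _ _ _.+1]/polish_iter iterS -/(polish_iter _ _ t) (@polish_ext _ _ _ _ IH) polish_join;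
  last exact: circ5 (cyc_in t).
by case: u => [x|i]; case: v => [y|j] //=; rewrite polish_circ // cyc_in.
Qed.

Definition o0 : 'I_18 := Ordinal (isT : 0 < 18).
Definition o1 : 'I_18 := Ordinal (isT : 1 < 18).
Definition o2 : 'I_18 := Ordinal (isT : 2 < 18).

Lemma cyc_diff S : S \in [:: S0; S1; S2] ->
  (circ (next S) o0 o1 != circ S o0 o1) || (circ (next S) o0 o2 != circ S o0 o2).
Proof. by rewrite !inE => /or3P [] /eqP ->; vm_compute. Qed.

Theorem theorem2 : forall k : nat, 4 < k ->
  exists (T : finType) (e : rel T),
    simple_graph e /\
    forall t : nat,
      ~ same_graph (polish_iter k e t.+1) (polish_iter k e t).
Proof.
move=> k hk; have -> : k = 5 + (k - 5) by rewrite subnKC.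
set a := k - 5.
exists ('I_18 + 'I_a)%type, (join a (circ S0)); split.
  split.
    move=> [x|i] [y|j] //=; rewrite /circ /circN /cd.
      by case: (ltngtP x y) => // ->.
    by rewrite eq_sym.
  move=> [x|i] //=; last by rewrite eqxx.
  by rewrite /circ /circN /cd leqnn subnn.
move=> t Hs.
have := @cyc_diff _ (cyc_in t).
have E x y : circ (cyc t.+1) x y = circ (cyc t) x y.
  by have := Hs (inl x) (inl y); rewrite !iter_join.
by rewrite /= !E !eqxx.
Qed.
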